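(* Let $K$ be an algebraically closed field and let $\omega = P\,dx + Q\,dy$ be a differential form with $P,Q \in K[x,y]$. If $\omega$ has a center at $a \in K^2$, then $d\omega(a) = 0$.
   Context: A differential form $\omega = P\,dx + Q\,dy$ has a zero at $a=(a_x,a_y)$ if $P(a)=Q(a)=0$. It has a center at $a$ if it has a zero at $a$ and there exist formal power series $\mu, F \in K[[x-a_x,\,y-a_y]]$ with $\mu(a) \neq 0$ and $dF = \mu\,\omega$. Here $d\omega = (Q_x - P_y)\,dx\wedge dy$ is the exterior derivative, and $d\omega(a)$ is its value at $a$. *)

(* Defs.v *)
(* Bivariate polynomials are {poly {poly K}}:
   the OUTER variable is y, the INNER (coefficient) variable is x,
   so P = \sum_j (\sum_i c_ij x^i) y^j. *)
From HB Require Import structures.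
From mathcomp Require Import all_boot all_order all_algebra.
Set Implicit Arguments. Unset Strict Implicit. Unset Printing Implicit Defensive.
Import Order.TTheory GRing.Theory Num.Theory.
Local Open Scope ring_scope.

Section Defs.
Variable K : fieldType.

Definition eval2 (P : {poly {poly K}}) (ax ay : K) : K := (P.[ay%:P]).[ax].

Definition dX (P : {poly {poly K}}) : {poly {poly K}} := map_poly (@deriv K) P.
Definition dY (P : {poly {poly K}}) : {poly {poly K}} := deriv P.

(* formal power series in two variables u, v: coefficient of u^i v^j *)
Definition pser := nat -> nat -> K.

Definition ps_mul (f g : pser) : pser := fun i j =>
  \sum_(k < i.+1) \sum_(l < j.+1) f k l * g (i - k)%N (j - l)%N.

Definition ps_du (f : pser) : pser := fun i j => f i.+1 j *+ i.+1.
Definition ps_dv (f : pser) : pser := fun i j => f i j.+1 *+ j.+1.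

Definition shift2 (P : {poly {poly K}}) (ax ay : K) : {poly {poly K}} :=
  (map_poly (fun p : {poly K} => p \Po ('X + ax%:P)) P) \Po ('X + (ay%:P)%:P).

(* P viewed as an element of K[[x - ax, y - ay]] *)
Definition ps_of_poly (P : {poly {poly K}}) (ax ay : K) : pser :=
  fun i j => ((shift2 P ax ay)`_j)`_i.

Definition has_zero (P Q : {poly {poly K}}) (ax ay : K) : Prop :=
  eval2 P ax ay = 0 /\ eval2 Q ax ay = 0.

(* omega has a center at a: zero at a, and mu, F in K[[x-ax,y-ay]] with
   mu(a) <> 0 and dF = mu * omega, i.e. F_x = mu P and F_y = mu Q. *)
Definition has_center (P Q : {poly {poly K}}) (ax ay : K) : Prop :=
  has_zero P Q ax ay /\
  exists mu F : pser, mu 0%N 0%N != 0 /\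
    ps_du F = ps_mul mu (ps_of_poly P ax ay) /\
    ps_dv F = ps_mul mu (ps_of_poly Q ax ay).

Definition domega_at (P Q : {poly {poly K}}) (ax ay : K) : K :=
  eval2 (dX Q - dY P) ax ay.
End Defs.

(* Main.v *)
Require Import Defs.
From HB Require Import structures.
From mathcomp Require Import all_boot all_order all_algebra.
Import GRing.Theory.
Local Open Scope ring_scope.

Section H.
Variable R : comNzRingType.

Lemma coef1_deriv (s : {poly R}) : s`_1 = s^`().[0].
Proof. by rewrite horner_coef0 coef_deriv. Qed.

Lemma Po0 (s : {poly R}) c : (s \Po ('X + c%:P))`_0 = s.[c].
Proof. by rewrite -horner_coef0 horner_comp hornerD hornerX hornerC add0r. Qed.

Lemma Po1 (s : {poly R}) c : (s \Po ('X + c%:P))`_1 = s^`().[c].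
Proof.
rewrite coef1_deriv deriv_comp derivD derivX derivC addr0 mulr1 horner_comp.
by rewrite hornerD hornerX hornerC add0r.
Qed.

Lemma map_deriv_MXaddC (q : {poly {poly R}}) d :
  map_poly (@deriv R) (q * 'X + d%:P) = map_poly (@deriv R) q * 'X + (d^`())%:P.
Proof.
apply/polyP => i; rewrite coef_map_id0 ?deriv0 // !coefD !coefMX !coefC derivD.
case: i => [|i] /=; first by rewrite derivC add0r.
by rewrite deriv0 addr0 coef_map_id0 ?deriv0 // addr0.
Qed.

Lemma map_deriv_horner (Q : {poly {poly R}}) c :
  (map_poly (@deriv R) Q).[c%:P] = (Q.[c%:P])^`().
Proof.
elim/poly_ind: Q => [|q d IH]; first by rewrite map_poly0 !horner0 deriv0.
rewrite map_deriv_MXaddC !hornerMXaddC IH derivD derivM derivC mulr0 addr0.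
by [].
Qed.
End H.

Theorem mainTheorem1 (K : closedFieldType) (P Q : {poly {poly K}}) (ax ay : K) :
  has_center P Q ax ay -> domega_at P Q ax ay = 0.
Proof.
have shift0 : forall S : {poly {poly K}}, ((shift2 S ax ay)`_0) = S.[ay%:P] \Po ('X + ax%:P).
  move=> S; rewrite /shift2 Po0.
  have -> : (fun p : {poly K} => p \Po ('X + ax%:P)) = comp_poly ('X + ax%:P) by [].
  by rewrite -{1}(comp_polyC ay ('X + ax%:P)) horner_map.
have shift1 : forall S : {poly {poly K}}, ((shift2 S ax ay)`_1) = S^`().[ay%:P] \Po ('X + ax%:P).
  move=> S; rewrite /shift2 Po1.
  have -> : (fun p : {poly K} => p \Po ('X + ax%:P)) = comp_poly ('X + ax%:P) by [].
  by rewrite deriv_map -{1}(comp_polyC ay ('X + ax%:P)) horner_map.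
case=> [[hP hQ] [mu [F [mu0 [hu hv]]]]].
have e1 := congr1 (fun f => f 0%N 1%N) hu.
have e2 := congr1 (fun f => f 1%N 0%N) hv.
move: e1 e2; rewrite /ps_du /ps_dv /ps_mul /ps_of_poly /=.
rewrite !big_ord_recr !big_ord0 /= !add0r !subnn !subn0 /=.
rewrite !shift0 !shift1 !Po0 !Po1.
move: hP hQ; rewrite /eval2 => -> ->; rewrite !mulr0 ?addr0 ?add0r.
move=> -> /eqP; rewrite -subr_eq0 -mulrBr mulf_eq0 (negbTE mu0) /= subr_eq0 => /eqP E.
rewrite /domega_at /eval2 /dX /dY hornerD hornerN map_deriv_horner.
by rewrite hornerD hornerN E subrr.
Qed.
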